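(* For a prime $p$ and integers $k$ and $h\ge1$, let $U(p;k,h)$ denote the number of $u\in\{0,\ldots,p-1\}$ such that $q_p(u)\equiv z\pmod p$ for some integer $z\in[k+1,k+h]$. Then for any integers $k$ and $h\ge 1$ we have $U(p;k,h)\le h^{1/2}p^{1/2+o(1)}$ as $p\to\infty$.
   Context: For a prime $p$ and an integer $u$ with $\gcd(u,p)=1$, the Fermat quotient $q_p(u)$ is the unique integer with $q_p(u)\equiv (u^{p-1}-1)/p \pmod p$ and $0\le q_p(u)\le p-1$; also $q_p(kp)=0$ for all $k\in\mathbb{Z}$. *)

(* Defs.v *)
From Stdlib Require Import ZArith Znumtheory List Reals.
Open Scope Z_scope.

(* Fermat quotient q_p(u): for u not divisible by p (p prime, so gcd(u,p)=1)
   it is the residue in [0, p-1] of (u^(p-1) - 1)/p (an exact division by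
   Fermat's little theorem); q_p(kp) = 0. *)
Definition fermat_quotient (p u : Z) : Z :=
  if u mod p =? 0 then 0 else ((u ^ (p - 1) - 1) / p) mod p.

Definition in_U (p k h u : Z) : bool :=
  existsb (fun j : nat => (fermat_quotient p u - (k + 1 + Z.of_nat j)) mod p =? 0)
          (seq 0 (Z.to_nat h)).

Definition U (p k h : Z) : nat :=
  length (filter (in_U p k h) (map Z.of_nat (seq 0 (Z.to_nat p)))).

(* Main.v *)
Require Import Defs.
From Stdlib Require Import ZArith Znumtheory List Reals Lia Lra.
From mathcomp Require ssreflect ssrfun ssrbool eqtype ssrnat seq div prime binomial.

Module DB.
Import ssreflect ssrfun ssrbool eqtype ssrnat seq div prime binomial.
Local Open Scope nat_scope.

Lemma bin_le_pow2 n m : 'C(n, m) <= 2 ^ n.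
Proof.
elim: n m => [|n IH] [|m] //.
  by rewrite bin0 expn_gt0.
rewrite binS expnS mul2n -addnn; apply: leq_add; exact: IH.
Qed.

Lemma pow_le_ffact m a : a.+1 ^ m <= (a + m) ^_ m.
Proof.
elim: m => [|m IH] //.
rewrite addnS ffactSS expnS; apply: leq_mul => //.
by rewrite ltnS leq_addr.
Qed.

Lemma poly_exp m a : a.+1 ^ m <= m`! * 2 ^ m * 2 ^ a.
Proof.
apply: (leq_trans (pow_le_ffact m a)).
rewrite -bin_ffact -mulnA -expnD [X in X <= _]mulnC leq_mul2l.
by rewrite addnC bin_le_pow2 orbT.
Qed.

Lemma large_exp m a q : 2 ^ m <= q -> a.+1 ^ m <= q ^ a.
Proof.
move=> hq.
apply: (@leq_trans ((2 ^ a) ^ m)).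
  case: m hq => [|m] hq; first by [].
  by rewrite leq_exp2r // ltn_expl.
rewrite expnAC; case: a => [|a] //; by rewrite leq_exp2r.
Qed.

Definition D n := size (divisors n).

Lemma D_mul p a r : prime p -> coprime p r -> 0 < r ->
  D (p ^ a * r) <= a.+1 * D r.
Proof.
move=> pp cpr r0.
have p1 : 1 < p by exact: prime_gt1.
have n0 : 0 < p ^ a * r by rewrite muln_gt0 expn_gt0 (ltnW p1).
rewrite /D -(size_iota 0 a.+1) -(size_allpairs (fun i e => p ^ i * e)).
apply: uniq_leq_size; first exact: divisors_uniq.
move=> d; rewrite -dvdn_divisors // => dd.
have d0 : 0 < d by apply: dvdn_gt0 dd.
case: (pfactor_coprime pp d0) => e cpe de.
set i := logn p d in de.
apply/allpairsP; exists (i, e); split; rewrite /=.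
- rewrite -[0 :: _]/(iota 0 a.+1) mem_iota /= add0n ltnS -(dvdn_Pexp2l _ _ p1).
  rewrite -(@Gauss_dvdl _ _ r); last by rewrite coprimeXl.
  by apply: dvdn_trans dd; rewrite de dvdn_mull.
- have e0 : 0 < e by move: d0; rewrite de muln_gt0 => /andP[].
  rewrite -dvdn_divisors // -(@Gauss_dvdr _ (p ^ a)); last first.
    by rewrite coprimeXr // coprime_sym.
  by apply: dvdn_trans dd; rewrite de dvdn_mulr.
- by rewrite de mulnC.
Qed.

Lemma decomp p n : prime p -> 0 < n ->
  exists a r, [/\ n = p ^ a * r, coprime p r, 0 < r & (p %| n -> 0 < a)].
Proof.
move=> pp n0; case: (pfactor_coprime pp n0) => r cpr nr.
exists (logn p n), r; split.
- by rewrite mulnC.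
- exact: cpr.
- by move: n0; rewrite nr muln_gt0 => /andP[].
- by move=> pn; rewrite logn_gt0 mem_primes pp n0 pn.
Qed.

Lemma D1 : D 1 = 1.
Proof. by []. Qed.

Lemma D_pow_mul m p a r : prime p -> coprime p r -> 0 < r ->
  D (p ^ a * r) ^ m <= a.+1 ^ m * D r ^ m.
Proof.
move=> pp cpr r0; rewrite -expnMn.
case: m => [|m] //; rewrite leq_exp2r //; exact: D_mul.
Qed.

Lemma Q0 m n : 0 < n -> (forall q, prime q -> q %| n -> 2 ^ m <= q) -> D n ^ m <= n.
Proof.
elim/ltn_ind: n => n IH n0 hq.
case: (ltngtP n 1) => [|n1|->]; last by rewrite D1 exp1n.
  by rewrite ltnS leqn0 => /eqP n00; rewrite n00 in n0.
have pp := pdiv_prime n1; have pn := pdiv_dvd n.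
move: pp pn; set q := pdiv n => pp pn.
case: (@decomp _ _ pp n0) => a [r [nr cpr r0 ha]].
have a0 := ha pn.
have hr : r < n.
  rewrite nr -{1}(mul1n r) ltn_mul2r r0 /=.
  by rewrite -(expn0 q) ltn_exp2l ?prime_gt1.
rewrite nr; apply: (leq_trans (@D_pow_mul m _ _ _ pp cpr r0)).
apply: leq_mul.
  exact: large_exp (hq _ pp pn).
apply: IH => // q' qp qr; apply: hq => //.
by rewrite nr; apply: dvdn_mull.
Qed.

Lemma Qj m j n : 0 < n ->
  (forall q, prime q -> q %| n -> q < 2 ^ m -> q < j) ->
  D n ^ m <= (m`! * 2 ^ m) ^ j * n.
Proof.
have B0 : 0 < m`! * 2 ^ m by rewrite muln_gt0 fact_gt0 expn_gt0.
elim: j n => [|j IH] n n0 hq.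
  rewrite expn0 mul1n; apply: Q0 => // q qp qn.
  by rewrite leqNgt; apply/negP => /(hq q qp qn).
case hj: [&& prime j, j %| n & j < 2 ^ m].
  case/and3P: hj => jp jn jK.
  case: (@decomp _ _ jp n0) => a [r [nr cpr r0 _]].
  have hr : D r ^ m <= (m`! * 2 ^ m) ^ j * r.
    apply: IH => // q qp qr qK.
    have qn : q %| n by rewrite nr dvdn_mull.
    have := hq q qp qn qK; rewrite ltnS leq_eqVlt => /orP[/eqP qj|//].
    move: cpr; rewrite -qj => cqr.
    have : q %| gcdn q r by rewrite dvdn_gcd dvdnn qr.
    by rewrite (eqP cqr) dvdn1 => /eqP q1; move: qp; rewrite q1.
  rewrite nr; apply: (leq_trans (@D_pow_mul m _ _ _ jp cpr r0)).
  rewrite expnS mulnACA; apply: leq_mul => //.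
  apply: (leq_trans (poly_exp m a)); apply: leq_mul => //.
  case: a {nr} => [|a] //; rewrite leq_exp2r //; exact: prime_gt1.
apply: (@leq_trans ((m`! * 2 ^ m) ^ j * n)).
  apply: IH => // q qp qn qK.
  have := hq q qp qn qK; rewrite ltnS leq_eqVlt => /orP[/eqP qj|//].
  by move: hj; rewrite -qj qp qn qK.
by rewrite leq_mul2r leq_pexp2l ?leqnSn ?orbT.
Qed.

Lemma divbound m n : 0 < n -> D n ^ m <= (m`! * 2 ^ m) ^ (2 ^ m) * n.
Proof. by move=> n0; apply: Qj. Qed.

Lemma In_mem (x : nat) l : In x l -> x \in l.
Proof.
elim: l => [|y l IH] //= [->|h]; rewrite in_cons ?eqxx //.
by rewrite IH ?orbT.
Qed.

Lemma mem_In (x : nat) l : x \in l -> In x l.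
Proof.
elim: l => [|y l IH] //=; rewrite in_cons => /orP[/eqP->|h]; [left|right] => //.
exact: IH.
Qed.

Lemma NoDup_uniq (l : list nat) : NoDup l -> uniq l.
Proof.
elim=> [|x l0 nx _ IH] //=; rewrite IH andbT; apply/negP => /mem_In; exact: nx.
Qed.

Lemma powE a b : Nat.pow a b = a ^ b.
Proof. elim: b => [|b IH] //=; by rewrite expnS IH. Qed.

Lemma divbound_std m : exists C, forall (n : nat) (l : list nat),
  (0 < n)%coq_nat -> NoDup l -> (forall d, In d l -> Nat.divide d n) ->
  (Nat.pow (length l) m <= Nat.mul C n)%coq_nat.
Proof.
exists ((m`! * 2 ^ m) ^ (2 ^ m)) => n l /ltP n0 nd hd.
apply/leP; apply: (@leq_trans (D n ^ m)); last exact: divbound.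
have : size l <= D n.
  apply: uniq_leq_size; first exact: NoDup_uniq.
  move=> d /mem_In /hd [k hk]; rewrite -dvdn_divisors // hk.
  exact: dvdn_mull.
rewrite powE; case: m => [|m] // h; rewrite leq_exp2r //.
Qed.

Lemma prime_bridge (p : nat) : Znumtheory.prime (Z.of_nat p) -> prime p.
Proof.
move=> hp; have [h1 _] := hp.
apply/primeP; split; first by apply/ltP; lia.
move=> d /dvdnP [k hk].
have hd : (Z.of_nat d | Z.of_nat p)%Z.
  exists (Z.of_nat k); rewrite hk; exact: (Nat2Z.inj_mul k d).
have := prime_divisors _ hp _ hd.
move=> H; apply/orP; case: H => [H|[H|[H|H]]].
- lia.
- left; apply/eqP; lia.
- right; apply/eqP; lia.
- lia.
Qed.

Lemma fermat_nat (p u : nat) : prime p -> ~~ (p %| u) -> p %| u ^ p.-1 - 1.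
Proof.
move=> pp npu.
have := fermat_little u pp.
have p0 : 0 < p by exact: prime_gt0.
have u0 : 0 < u by case: u npu => //; rewrite dvdn0.
move/eqP; rewrite eqn_mod_dvd; last first.
  by rewrite -(prednK p0) expnS -{1}(muln1 u) leq_mul2l expn_gt0 u0 orbT.
have -> : u ^ p - u = u * (u ^ p.-1 - 1) by rewrite mulnBr muln1 -expnS prednK.
by rewrite Gauss_dvdr // prime_coprime.
Qed.

Lemma fermat_std (p u : nat) : Znumtheory.prime (Z.of_nat p) ->
  ~ Nat.divide p u -> Nat.divide p (Nat.sub (Nat.pow u (Nat.sub p 1)) 1).
Proof.
move=> hp npu; have pp := prime_bridge p hp.
have : p %| u ^ p.-1 - 1.
  apply: fermat_nat => //; apply/negP => /dvdnP [k hk]; apply: npu.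
  by exists k.
move/dvdnP => [k hk]; exists k.
by rewrite powE minusE multE !subn1 -hk subn1.
Qed.
End DB.

Section Alg.
Variable p : Z.
Hypothesis Hp : prime p.

Lemma p_ge2 : 2 <= p.
Proof. exact (prime_ge_2 p Hp). Qed.

Definition Q (u : Z) := (u ^ (p - 1) - 1) / p.

Lemma eqmod_div a b : a mod p = b mod p -> (p | a - b).
Proof.
  intro H. pose proof p_ge2.
  exists (a / p - b / p).
  rewrite (Z.div_mod a p) at 1 by lia. rewrite (Z.div_mod b p) at 1 by lia.
  rewrite H. ring.
Qed.

Lemma submod0 a b : (a - b) mod p = 0 -> a mod p = b mod p.
Proof.
  intro H. pose proof p_ge2.
  apply Z.mod_divide in H; [|lia]. destruct H as [c Hc].
  replace a with (b + c * p) by lia. apply Z.mod_add. lia.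
Qed.

Lemma notdiv_mod u : u mod p <> 0 -> ~ (p | u).
Proof.
  intros H D. apply H. apply Z.mod_divide; auto. pose proof p_ge2; lia.
Qed.

Lemma mul_notdiv u v : u mod p <> 0 -> v mod p <> 0 -> (u * v) mod p <> 0.
Proof.
  intros hu hv H. pose proof p_ge2.
  apply Z.mod_divide in H; [|lia].
  destruct (prime_mult p Hp u v H) as [D|D]; [exact (notdiv_mod u hu D)|exact (notdiv_mod v hv D)].
Qed.


Lemma ndiv_nat a b : Nat.divide a b -> (Z.of_nat a | Z.of_nat b).
Proof. intros [k hk]. exists (Z.of_nat k). subst. lia. Qed.

Lemma fermatZ u : 0 < u -> u mod p <> 0 -> (u ^ (p - 1) - 1) mod p = 0.
Proof.
  intros hu hm. pose proof p_ge2.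
  assert (HP : prime (Z.of_nat (Z.to_nat p))) by (rewrite Z2Nat.id by lia; exact Hp).
  assert (ND : ~ Nat.divide (Z.to_nat p) (Z.to_nat u)).
  { intros D. apply ndiv_nat in D. rewrite !Z2Nat.id in D by lia.
    exact (notdiv_mod u hm D). }
  pose proof (DB.fermat_std _ _ HP ND) as F.
  apply ndiv_nat in F.
  assert (Hpow : (1 <= Nat.pow (Z.to_nat u) (Z.to_nat p - 1))%nat).
  { assert (Nat.pow (Z.to_nat u) (Z.to_nat p - 1) <> 0%nat) by (apply Nat.pow_nonzero; lia). lia. }
  rewrite Nat2Z.inj_sub in F by lia.
  rewrite Nat2Z.inj_pow, Nat2Z.inj_sub in F by lia.
  rewrite !Z2Nat.id in F by lia. simpl in F.
  apply Z.mod_divide; [lia|]. exact F.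
Qed.

Lemma Q_spec u : 0 < u -> u mod p <> 0 -> u ^ (p - 1) = 1 + p * Q u.
Proof.
  intros hu hm. pose proof p_ge2. unfold Q.
  pose proof (fermatZ u hu hm) as F.
  apply Z.div_exact in F; lia.
Qed.

Lemma fq_eq u : u mod p <> 0 -> fermat_quotient p u = Q u mod p.
Proof.
  intros hm. unfold fermat_quotient. apply Z.eqb_neq in hm. rewrite hm. reflexivity.
Qed.

Lemma Q_mul u v : 0 < u -> 0 < v -> u mod p <> 0 -> v mod p <> 0 ->
  Q (u * v) = Q u + Q v + p * Q u * Q v.
Proof.
  intros hu hv mu mv. pose proof p_ge2.
  unfold Q at 1. rewrite Z.pow_mul_l, (Q_spec u hu mu), (Q_spec v hv mv).
  replace ((1 + p * Q u) * (1 + p * Q v) - 1) with ((Q u + Q v + p * Q u * Q v) * p) by ring.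
  apply Z.div_mul. lia.
Qed.


Lemma binom1 (x c : Z) (e : nat) : exists t,
  (x + c) ^ Z.of_nat (S e) = x ^ Z.of_nat (S e) + Z.of_nat (S e) * c * x ^ Z.of_nat e + c ^ 2 * t.
Proof.
  induction e as [|e [t IH]].
  - exists 0. change (Z.of_nat 1) with 1. change (Z.of_nat 0) with 0. rewrite !Z.pow_1_r, Z.pow_0_r. ring.
  - exists (Z.of_nat (S e) * x ^ Z.of_nat e + t * (x + c)).
    rewrite !Nat2Z.inj_succ in *.
    rewrite (Z.pow_succ_r (x + c) (Z.succ (Z.of_nat e))) by lia.
    rewrite IH, !Z.pow_succ_r by lia. unfold Z.succ. ring.
Qed.

Lemma pow_div_prime n (e : nat) : (p | n ^ Z.of_nat e) -> (p | n).
Proof.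
  pose proof p_ge2. induction e as [|e IH]; intros D.
  - simpl in D. apply Z.divide_1_r in D. lia.
  - rewrite Nat2Z.inj_succ, Z.pow_succ_r in D by lia.
    destruct (prime_mult p Hp _ _ D) as [D1|D1]; auto.
Qed.

Lemma uniq_n n1 n2 : 0 < n1 < p * p -> 0 < n2 < p * p -> n1 mod p <> 0 ->
  n1 mod p = n2 mod p -> Q n1 mod p = Q n2 mod p -> n1 = n2.
Proof.
  intros h1 h2 m1 e12 q12. pose proof p_ge2.
  assert (m2 : n2 mod p <> 0) by congruence.
  set (b := n2 / p - n1 / p).
  assert (hb : n2 = n1 + p * b).
  { unfold b. rewrite (Z.div_mod n2 p) at 1 by lia. rewrite (Z.div_mod n1 p) at 1 by lia.
    rewrite e12. ring. }
  assert (bb : - p < b < p).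
  { assert (0 <= n1 / p < p). { split. apply Z.div_pos; lia. apply Z.div_lt_upper_bound; lia. }
    assert (0 <= n2 / p < p). { split. apply Z.div_pos; lia. apply Z.div_lt_upper_bound; lia. }
    unfold b; lia. }
  destruct (binom1 n1 (p * b) (Z.to_nat (p - 2))) as [t Ht].
  replace (Z.of_nat (S (Z.to_nat (p - 2)))) with (p - 1) in Ht by lia.
  rewrite Z2Nat.id in Ht by lia.
  rewrite <- hb, (Q_spec n2 ltac:(lia) m2), (Q_spec n1 ltac:(lia) m1) in Ht.
  assert (HQ : Q n2 = Q n1 + (p - 1) * b * n1 ^ (p - 2) + p * b ^ 2 * t).
  { apply (Z.mul_reg_l _ _ p); [lia|]. rewrite Z.mul_add_distr_l. nia. }
  apply eqmod_div in q12.
  assert (D : (p | (p - 1) * (b * n1 ^ (p - 2)))).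
  { replace ((p - 1) * (b * n1 ^ (p - 2))) with ((Q n2 - Q n1) - p * (b ^ 2 * t)) by (rewrite HQ; ring).
    apply Z.divide_sub_r. 
    - apply Z.divide_opp_r in q12. replace (Q n2 - Q n1) with (- (Q n1 - Q n2)) by ring. exact q12.
    - apply Z.divide_factor_l. }
  destruct (prime_mult p Hp _ _ D) as [D1|D1].
  - apply Z.divide_pos_le in D1; lia.
  - destruct (prime_mult p Hp _ _ D1) as [D2|D2].
    + destruct D2 as [c Hc]. assert (Hc0 : c = 0) by nia. rewrite Hc0 in Hc. lia.
    + replace (p - 2) with (Z.of_nat (Z.to_nat (p - 2))) in D2 by lia.
      apply pow_div_prime in D2. exfalso. exact (notdiv_mod n1 m1 D2).
Qed.
End Alg.

Section Lists.
Lemma sum_if_ge1 {A B} (idx : list B) (P : B -> A -> bool) a b :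
  In b idx -> P b a = true ->
  (1 <= list_sum (map (fun b => if P b a then 1 else 0) idx))%nat.
Proof.
  induction idx as [|b' idx IH]; simpl; [tauto|].
  intros [<-|H] hp.
  - rewrite hp. lia.
  - specialize (IH H hp). lia.
Qed.

Lemma sum_cons {A B} (idx : list B) (P : B -> A -> bool) a l :
  list_sum (map (fun b => length (filter (P b) (a :: l))) idx) =
  (list_sum (map (fun b => if P b a then 1 else 0) idx) +
   list_sum (map (fun b => length (filter (P b) l)) idx))%nat.
Proof.
  induction idx as [|b idx IH]; [reflexivity|]. cbn [map]. unfold list_sum in *. cbn [fold_right].
  rewrite IH. cbn [filter]. destruct (P b a); cbn [length]; lia.
Qed.

Lemma cover {A B} (l : list A) (idx : list B) (P : B -> A -> bool) :
  (forall a, In a l -> exists b, In b idx /\ P b a = true) ->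
  (length l <= list_sum (map (fun b => length (filter (P b) l)) idx))%nat.
Proof.
  induction l as [|a l IH]; intros H; [simpl; lia|].
  change (length (a :: l)) with (S (length l)). rewrite sum_cons.
  destruct (H a (or_introl eq_refl)) as [b [hb hp]].
  pose proof (sum_if_ge1 idx P a b hb hp).
  assert (length l <= list_sum (map (fun b => length (filter (P b) l)) idx))%nat
    by (apply IH; intros; apply H; simpl; auto).
  lia.
Qed.

Lemma maxbound {B} (idx : list B) (f : B -> nat) (m K : nat) :
  (1 <= m)%nat -> (forall b, In b idx -> (f b ^ m <= K)%nat) ->
  exists M, (M ^ m <= K)%nat /\ (list_sum (map f idx) <= length idx * M)%nat.
Proof.
  intros hm. induction idx as [|b idx IH]; intros H.
  - exists 0%nat. rewrite Nat.pow_0_l by lia. simpl. lia.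
  - destruct IH as [M [h1 h2]]. { intros; apply H; simpl; auto. }
    exists (Nat.max (f b) M). split.
    + destruct (Nat.max_spec (f b) M) as [[_ ->]|[_ ->]]; auto. apply H; simpl; auto.
    + simpl. pose proof (Nat.le_max_l (f b) M). pose proof (Nat.le_max_r (f b) M). nia.
Qed.

Lemma NoDup_map_on {A B} (g : A -> B) (l : list A) :
  NoDup l -> (forall x y, In x l -> In y l -> g x = g y -> x = y) -> NoDup (map g l).
Proof.
  induction 1 as [|x l nx nd IH]; intros H; simpl; constructor.
  - intros Hin. apply in_map_iff in Hin. destruct Hin as [y [hy iy]].
    assert (y = x) by (apply H; simpl; auto). subst. contradiction.
  - apply IH. intros; apply H; simpl; auto.
Qed.

Lemma NoDup_prod {A B} (l1 : list A) (l2 : list B) :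
  NoDup l1 -> NoDup l2 -> NoDup (list_prod l1 l2).
Proof.
  intros n1 n2. induction n1 as [|x l1 nx nd IH]; simpl; [constructor|].
  apply NoDup_app; auto.
  - apply NoDup_map_on; auto. intros y z _ _ E. congruence.
  - intros [a b] H1 H2. apply in_map_iff in H1. destruct H1 as [y [E _]].
    inversion E; subst. apply in_prod_iff in H2. tauto.
Qed.
End Lists.

Section Count.
Variables p k h : Z.
Hypothesis Hp : prime p.
Hypothesis Hh : 1 <= h.

Definition L := filter (in_U p k h) (map Z.of_nat (List.seq 1 (Z.to_nat p - 1))).

Lemma U_le : (U p k h <= S (length L))%nat.
Proof.
  pose proof (p_ge2 p Hp) as Hp2. unfold U, L.
  replace (Z.to_nat p) with (S (Z.to_nat p - 1)) at 1 by lia.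
  cbn [List.seq map filter]. destruct (in_U p k h (Z.of_nat 0)); cbn [length]; lia.
Qed.

Lemma L_prop u : In u L -> 1 <= u <= p - 1 /\
  exists j, 0 <= j < h /\ (fermat_quotient p u - (k + 1 + j)) mod p = 0.
Proof.
  pose proof (p_ge2 p Hp) as Hp2. unfold L. intros H.
  apply filter_In in H. destruct H as [H1 H2].
  apply in_map_iff in H1. destruct H1 as [x [<- hx]]. apply in_seq in hx.
  split; [lia|].
  unfold in_U in H2. apply existsb_exists in H2. destruct H2 as [j [hj ej]].
  apply in_seq in hj. apply Z.eqb_eq in ej.
  exists (Z.of_nat j). split; [lia|exact ej].
Qed.

Lemma L_nodup : NoDup L.
Proof.
  unfold L. apply NoDup_filter. apply NoDup_map_on.
  - apply seq_NoDup.
  - intros x y _ _ E. lia.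
Qed.

Definition Pb (b : nat * nat) (x : Z * Z) : bool :=
  ((fst x * snd x) mod p =? Z.of_nat (fst b)) &&
  ((fermat_quotient p (fst x) + fermat_quotient p (snd x) - (2 * k + 2 + Z.of_nat (snd b))) mod p =? 0).

Definition idx := list_prod (List.seq 0 (Z.to_nat p)) (List.seq 0 (2 * Z.to_nat h)).

Lemma cover_ok x : In x (list_prod L L) -> exists b, In b idx /\ Pb b x = true.
Proof.
  pose proof (p_ge2 p Hp) as Hp2. destruct x as [u v]. intros H.
  apply in_prod_iff in H. destruct H as [hu hv].
  destruct (L_prop u hu) as [bu [ju [hju eu]]].
  destruct (L_prop v hv) as [bv [jv [hjv ev]]].
  exists (Z.to_nat ((u * v) mod p), Z.to_nat (ju + jv)). split.
  - unfold idx. apply in_prod; apply in_seq.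
    + pose proof (Z.mod_pos_bound (u * v) p ltac:(lia)). lia.
    + lia.
  - unfold Pb. cbn [fst snd]. apply andb_true_intro. split.
    + apply Z.eqb_eq. pose proof (Z.mod_pos_bound (u * v) p ltac:(lia)). lia.
    + apply Z.eqb_eq. apply Z.mod_divide; [lia|].
      apply Z.mod_divide in eu; [|lia]. apply Z.mod_divide in ev; [|lia].
      replace (fermat_quotient p u + fermat_quotient p v - (2 * k + 2 + Z.of_nat (Z.to_nat (ju + jv))))
        with ((fermat_quotient p u - (k + 1 + ju)) + (fermat_quotient p v - (k + 1 + jv))) by lia.
      apply Z.divide_add_r; auto.
Qed.


Lemma small_nz u : 1 <= u <= p - 1 -> u mod p <> 0.
Proof. intros H. rewrite Z.mod_small by lia. lia. Qed.

Lemma Qmod_pair u v : 1 <= u <= p - 1 -> 1 <= v <= p - 1 ->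
  Q p (u * v) mod p = (fermat_quotient p u + fermat_quotient p v) mod p.
Proof.
  intros hu hv. pose proof (p_ge2 p Hp) as Hp2.
  rewrite (Q_mul p Hp u v) by (try lia; apply small_nz; lia).
  rewrite (fq_eq p u (small_nz u hu)), (fq_eq p v (small_nz v hv)).
  replace (Q p u + Q p v + p * Q p u * Q p v) with (Q p u + Q p v + (Q p u * Q p v) * p) by ring.
  rewrite Z.mod_add by lia. rewrite Z.add_mod by lia. reflexivity.
Qed.

Lemma same_prod b x1 x2 :
  In x1 (filter (Pb b) (list_prod L L)) -> In x2 (filter (Pb b) (list_prod L L)) ->
  fst x1 * snd x1 = fst x2 * snd x2.
Proof.
  pose proof (p_ge2 p Hp) as Hp2.
  destruct x1 as [u1 v1], x2 as [u2 v2]. cbn [fst snd].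
  intros H1 H2. apply filter_In in H1, H2.
  destruct H1 as [H1 P1], H2 as [H2 P2].
  apply in_prod_iff in H1, H2.
  destruct H1 as [hu1 hv1], H2 as [hu2 hv2].
  destruct (L_prop u1 hu1) as [bu1 _], (L_prop v1 hv1) as [bv1 _].
  destruct (L_prop u2 hu2) as [bu2 _], (L_prop v2 hv2) as [bv2 _].
  unfold Pb in P1, P2. cbn [fst snd] in P1, P2.
  apply andb_prop in P1, P2. destruct P1 as [P1 R1], P2 as [P2 R2].
  apply Z.eqb_eq in P1, P2, R1, R2.
  apply (uniq_n p Hp).
  - nia.
  - nia.
  - apply (mul_notdiv p Hp); apply small_nz; lia.
  - congruence.
  - rewrite (Qmod_pair u1 v1), (Qmod_pair u2 v2) by lia.
    apply submod0 in R1; [|exact Hp]. apply submod0 in R2; [|exact Hp]. congruence.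
Qed.


Lemma fib_bound (m C : nat) (hm : (1 <= m)%nat)
  (HC : forall (n : nat) (l : list nat), (0 < n)%nat -> NoDup l ->
        (forall d, In d l -> Nat.divide d n) -> (Nat.pow (length l) m <= C * n)%nat) b :
  (Nat.pow (length (filter (Pb b) (list_prod L L))) m <= C * (Z.to_nat p * Z.to_nat p))%nat.
Proof.
  pose proof (p_ge2 p Hp) as Hp2.
  remember (filter (Pb b) (list_prod L L)) as F eqn:EF.
  destruct F as [|x0 F'].
  - cbn [length]. rewrite Nat.pow_0_l by lia. lia.
  - assert (In0 : In x0 (filter (Pb b) (list_prod L L))) by (rewrite <- EF; simpl; auto).
    assert (InL : forall x, In x (x0 :: F') -> In x (list_prod L L)).
    { intros x hx. rewrite EF in hx. apply filter_In in hx. tauto. }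
    assert (Bd : forall x, In x (x0 :: F') -> (1 <= fst x <= p - 1) /\ (1 <= snd x <= p - 1)).
    { intros [u v] hx. apply InL in hx. apply in_prod_iff in hx. destruct hx as [hu hv].
      destruct (L_prop u hu) as [bu _], (L_prop v hv) as [bv _]. cbn [fst snd]. auto. }
    assert (SP : forall x, In x (x0 :: F') -> fst x * snd x = fst x0 * snd x0).
    { intros x hx. apply (same_prod b); auto. rewrite <- EF. exact hx. }
    set (n := fst x0 * snd x0) in *.
    assert (Bn : 1 <= n <= p * p).
    { destruct (Bd x0 (or_introl eq_refl)). unfold n. nia. }
    rewrite <- (length_map (fun x => Z.to_nat (fst x))).
    apply Nat.le_trans with (C * Z.to_nat n)%nat.
    + apply HC.
      * lia.
      * apply NoDup_map_on.
        -- rewrite EF. apply NoDup_filter. apply NoDup_prod; apply L_nodup.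
        -- intros [u1 v1] [u2 v2] h1 h2 E. cbn [fst snd] in E.
           pose proof (Bd _ h1) as B1. pose proof (Bd _ h2) as B2.
           pose proof (SP _ h1) as S1. pose proof (SP _ h2) as S2.
           cbn [fst snd] in *.
           assert (u1 = u2) by lia. subst u2.
           f_equal. apply (Z.mul_reg_l _ _ u1); lia.
      * intros d hd. apply in_map_iff in hd. destruct hd as [[u v] [<- hx]].
        pose proof (Bd _ hx) as B1. pose proof (SP _ hx) as S1. cbn [fst snd] in *.
        exists (Z.to_nat v). rewrite <- S1. rewrite Z2Nat.inj_mul by lia. lia.
    + apply Nat.mul_le_mono_l. rewrite <- Z2Nat.inj_mul by lia. apply Z2Nat.inj_le; lia.
Qed.


Lemma count_main (m C : nat) (hm : (1 <= m)%nat)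
  (HC : forall (n : nat) (l : list nat), (0 < n)%nat -> NoDup l ->
        (forall d, In d l -> Nat.divide d n) -> (Nat.pow (length l) m <= C * n)%nat) :
  exists M, (Nat.pow M m <= C * (Z.to_nat p * Z.to_nat p))%nat /\
    (length L * length L <= (Z.to_nat p * (2 * Z.to_nat h)) * M)%nat.
Proof.
  destruct (maxbound idx (fun b => length (filter (Pb b) (list_prod L L))) m
     (C * (Z.to_nat p * Z.to_nat p)) hm) as [M [h1 h2]].
  { intros b _. apply (fib_bound m C hm HC). }
  exists M. split; auto.
  unfold idx in h2. rewrite length_prod, !length_seq in h2.
  rewrite <- length_prod. eapply Nat.le_trans; [|exact h2].
  apply cover. apply cover_ok.
Qed.
End Count.

Lemma nat_final (m C Un N M pn hn : nat) : (1 <= m)%nat -> (1 <= hn)%nat -> (1 <= pn)%nat ->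
  (Un <= S N)%nat -> (N * N <= pn * (2 * hn) * M)%nat -> (Nat.pow M m <= C * (pn * pn))%nat ->
  (Nat.pow 8 m * (C + 1) <= pn)%nat ->
  (Nat.pow Un (2 * m) <= Nat.pow hn m * Nat.pow pn (m + 4))%nat.
Proof.
  intros hm hh hp hU hN hM hP.
  assert (Ph : (1 <= Nat.pow hn m)%nat) by (apply (Nat.pow_le_mono_l 1 hn m) in hh; rewrite Nat.pow_1_l in hh; lia).
  assert (Pp : (1 <= Nat.pow pn m)%nat) by (apply (Nat.pow_le_mono_l 1 pn m) in hp; rewrite Nat.pow_1_l in hp; lia).
  rewrite Nat.pow_add_r.
  replace (Nat.pow pn 4) with (pn * pn * pn * pn)%nat by (simpl; ring).
  destruct N as [|N].
  - assert (hU1 : (Un <= 1)%nat) by lia.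
    apply (Nat.pow_le_mono_l _ _ (2 * m)) in hU1. rewrite Nat.pow_1_l in hU1. nia.
  - assert (hUU : (Un * Un <= 8 * pn * hn * M)%nat) by nia.
    rewrite Nat.pow_mul_r. replace (Nat.pow Un 2) with (Un * Un)%nat by (simpl; ring).
    apply (Nat.pow_le_mono_l _ _ m) in hUU.
    rewrite !Nat.pow_mul_l in hUU.
    assert (H8 : (Nat.pow 8 m * C <= pn)%nat) by nia.
    set (A := Nat.pow 8 m) in *. set (X := Nat.pow pn m) in *. set (Y := Nat.pow hn m) in *.
    set (Z0 := Nat.pow M m) in *. set (W := Nat.pow (Un * Un) m) in *.
    assert (S1 : (A * X * Y * Z0 <= A * X * Y * (C * (pn * pn)))%nat) by (apply Nat.mul_le_mono_l; exact hM).
    assert (S2 : (A * X * Y * (C * (pn * pn)) = X * Y * ((A * C) * (pn * pn)))%nat) by ring.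
    assert (S3 : (X * Y * ((A * C) * (pn * pn)) <= X * Y * (pn * (pn * pn)))%nat) by
      (apply Nat.mul_le_mono_l; apply Nat.mul_le_mono_r; exact H8).
    assert (S4 : (X * Y * (pn * (pn * pn)) <= Y * (X * (pn * pn * pn * pn)))%nat) by nia.
    assert (W = Nat.pow Un m * Nat.pow Un m)%nat by (unfold W; apply Nat.pow_mul_l). lia.
Qed.

Lemma real_final (Un m : nat) (h p : Z) (eps : R) : 1 <= h -> 2 <= p -> (1 <= m)%nat ->
  (0 < eps)%R -> (2 <= INR m * eps)%R ->
  (Nat.pow Un (2 * m) <= Nat.pow (Z.to_nat h) m * Nat.pow (Z.to_nat p) (m + 4))%nat ->
  (INR Un <= sqrt (IZR h) * Rpower (IZR p) (1/2 + eps))%R.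
Proof.
  intros hh hp hm he hme HN.
  assert (Hh : (1 <= IZR h)%R) by (apply IZR_le; lia).
  assert (Hp : (2 <= IZR p)%R) by (apply IZR_le; lia).
  set (a := (1/2 + eps)%R).
  set (Rv := (sqrt (IZR h) * Rpower (IZR p) a)%R).
  assert (Rpos : (0 < Rv)%R).
  { unfold Rv. apply Rmult_lt_0_compat. apply sqrt_lt_R0; lra. unfold Rpower. apply exp_pos. }
  destruct (Rle_lt_dec (INR Un) Rv) as [ok|lt]; [exact ok|exfalso].
  apply le_INR in HN. rewrite mult_INR, !pow_INR in HN.
  rewrite (INR_IZR_INZ (Z.to_nat h)), (INR_IZR_INZ (Z.to_nat p)), !Z2Nat.id in HN by lia.
  assert (E1 : (Rv ^ (2 * m) < INR Un ^ (2 * m))%R).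
  { rewrite <- !Rpower_pow by lra. apply Rlt_Rpower_l.
    - apply lt_0_INR. lia.
    - lra. }
  assert (E2 : (Rv ^ (2 * m) = IZR h ^ m * Rpower (IZR p) (a * INR (2 * m)))%R).
  { unfold Rv. rewrite Rpow_mult_distr. rewrite pow_mult, pow2_sqrt by lra.
    rewrite <- (Rpower_pow (2 * m) (Rpower (IZR p) a)) by (unfold Rpower; apply exp_pos). rewrite Rpower_mult. reflexivity. }
  assert (E3 : (IZR p ^ (m + 4) <= Rpower (IZR p) (a * INR (2 * m)))%R).
  { rewrite <- Rpower_pow by lra. apply Rle_Rpower; [lra|].
    rewrite plus_INR, mult_INR. unfold a. simpl (INR 2). simpl (INR 4). nra. }
  assert (E4 : (IZR h ^ m * IZR p ^ (m + 4) <= IZR h ^ m * Rpower (IZR p) (a * INR (2 * m)))%R).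
  { apply Rmult_le_compat_l; [|exact E3]. apply pow_le; lra. }
  lra.
Qed.

Theorem theorem9 :
  forall eps : R, (0 < eps)%R ->
  exists P0 : Z, forall p k h : Z,
    prime p -> (P0 <= p)%Z -> (1 <= h)%Z ->
    (INR (U p k h) <= sqrt (IZR h) * Rpower (IZR p) (1/2 + eps))%R.
Proof.
  intros eps he.
  set (z := up (2 / eps)).
  destruct (archimed (2 / eps)) as [ha _]. fold z in ha.
  assert (z0 : (0 < z)%Z).
  { apply lt_0_IZR. assert (0 < 2 / eps)%R by (apply Rdiv_lt_0_compat; lra). lra. }
  set (m := S (Z.to_nat z)).
  assert (hm : (1 <= m)%nat) by (unfold m; lia).
  assert (hme : (2 <= INR m * eps)%R).
  { unfold m. rewrite S_INR, INR_IZR_INZ, Z2Nat.id by lia.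
    assert (2 / eps * eps = 2)%R by (field; lra).
    assert (2 / eps * eps <= (IZR z + 1) * eps)%R by (apply Rmult_le_compat_r; lra).
    lra. }
  destruct (DB.divbound_std m) as [C HC].
  exists (Z.of_nat (Nat.pow 8 m * (C + 1))).
  intros p k h Hp HP0 Hh.
  pose proof (p_ge2 p Hp) as Hp2.
  destruct (count_main p k h Hp Hh m C hm HC) as [M [h1 h2]].
  apply (real_final (U p k h) m h p eps); auto.
  apply (nat_final m C (U p k h) (length (L p k h)) M (Z.to_nat p) (Z.to_nat h)); auto; try lia.
  apply U_le; auto.
Qed.
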